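(* Let $f\in S(\mathcal{P},\nu,\rho,d,C)$, let $(f_z)_{z\in Z}$ be fidelity approximations with cost-to-bias function $\Phi$, and run Kometo with budget $\Lambda\ge1$. Let $\Psi$ be a non-increasing function with $\Phi\le\Psi$, let $j$ be a non-negative integer and $\tilde h$ a positive real number such that (1) $\Psi(e^j)\le\nu\rho^{\tilde h}$ and (2) $\frac{\tilde\Lambda}{4\tilde h e^j}\ge C\rho^{-d\tilde h}$, where $\tilde\Lambda=\left\lfloor\frac{(e-1)\Lambda}{2Ke(\log\Lambda+1)^2}\right\rfloor$. Then the simple regret of Kometo satisfies $r_\Lambda\le\frac{3\nu}{\rho}\rho^{\tilde h}+2\Psi(\tilde\Lambda)$.
   Context: $\mathcal{X}$ has a hierarchical partitioning $\mathcal{P}=(\mathcal{P}_{h,i})_{h\ge0,0\le i\le K^h-1}$, $K\ge2$: $\mathcal{P}_{0,0}=\mathcal{X}$, the children $\mathcal{P}_{h+1,Ki+l}$ ($0\le l\le K-1$) of $\mathcal{P}_{h,i}$ partition it; each cell has a representative $x_{h,i}\in\mathcal{P}_{h,i}$. $\nu>0$, $\rho\in(0,1)$, $d\ge0$, $C>1$. $S(\mathcal{P},\nu,\rho,d,C)$: set of $f:\mathcal{X}\to\mathbb{R}$ such that for one global maximizer $x^\star$ and all $h$, each $x$ in the depth-$h$ cell containing $x^\star$ has $f(x)\ge f(x^\star)-\nu\rho^h$, and for every $h$ at most $C\rho^{-dh}$ depth-$h$ cells $\mathcal{P}_{h,i}$ satisfy $\sup_{\mathcal{P}_{h,i}}f\ge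 f(x^\star)-3\nu\rho^h$. Multi-fidelity: $Z=[0,1]$, $f_z:\mathcal{X}\to\mathbb{R}$, bias $\zeta:Z\to[0,+\infty]$ with strictly increasing $g_z$ and $\sup_x|f(x)-g_z(f_z(x))|\le\zeta(z)$, cost $\lambda$, and for each $c\ge1$ an available fidelity $z_c$ with $\lambda(z_c)\le c$; cost-to-bias function $\Phi(c)=\zeta(z_c)$ on $[1,\infty)$. Simple regret $r_\Lambda=\mathbb{E}[\max f-f(x_\Lambda)]$. Kometo ($\log$ natural): $j_{\max}=\lfloor\log\tilde\Lambda\rfloor$; level $j$ means fidelity $z_{e^j}$; flags $T_{h,i,j}\in\{0,1\}$ (initially 0) and values $f_{h,i,j}=f_{z_{e^j}}(x_{h,i})$ when $T_{h,i,j}=1$. Opening $\mathcal{P}_{h,i}$ at level $j$: for each child $\mathcal{P}_{h+1,i'}$ and $0\le u\le j$, set $T_{h+1,i',u}=1$ and evaluate $f_{h+1,i',u}$. Steps: open $\mathcal{P}_{0,0}$ with budget $\tilde\Lambda$ (level $j_{\max}$); for $h=1..\lfloor\tilde\Lambda\rfloor$, $m=1..\lfloor\tilde\Lambda/h\rfloor$, with $j=\lfloor\log\frac{\tilde\Lambda}{hm}\rfloor$, open at level $j$ the not-yet-opened depth-$h$ cell with $T_{h,i,j}=1$ and highest $f_{h,i,j}$; for $j=0..j_{\max}$ let $x^c_j$ be the representative of a cell maximizing $f_{h,i,j}$ over $T_{h,i,j}=1$ and evaluate $f_{z_{\tilde\Lambda}}(x^c_j)$; output $x_\Lambda=\arg\max_j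 f_{z_{\tilde\Lambda}}(x^c_j)$. *)

(* Defs.v *)
From mathcomp Require Import all_boot all_order all_algebra.
From mathcomp Require Import all_classical all_reals all_analysis.
Set Implicit Arguments. Unset Strict Implicit. Unset Printing Implicit Defensive.
Import Order.TTheory GRing.Theory Num.Theory.
Local Open Scope classical_set_scope.
Local Open Scope ring_scope.

Definition hier_partition (X : Type) (K : nat) (P : nat -> nat -> set X)
    (xr : nat -> nat -> X) : Prop :=
  [/\ P 0%N 0%N = setT,
      (forall h i, (i < K ^ h)%N ->
         P h i = \bigcup_(l in [set l : nat | (l < K)%N]) P h.+1 (K * i + l)%N),
      (forall h i l l', (i < K ^ h)%N -> (l < K)%N -> (l' < K)%N -> l <> l' ->
         P h.+1 (K * i + l)%N `&` P h.+1 (K * i + l')%N = set0)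
    & (forall h i, (i < K ^ h)%N -> P h i (xr h i))].

(* sup of f over a cell, in the extended reals (-oo on an empty cell) *)
Definition cell_sup (R : realType) (X : Type) (f : X -> R) (A : set X) : \bar R :=
  ereal_sup [set (f x)%:E | x in A].

Definition class_S (R : realType) (X : Type) (K : nat) (P : nat -> nat -> set X)
    (nu rho d C : R) (f : X -> R) : Prop :=
  exists xstar : X,
    [/\ (forall x, f x <= f xstar),
        (forall h i x, (i < K ^ h)%N -> P h i xstar -> P h i x ->
           f xstar - nu * rho ^+ h <= f x)
      & (forall h (s : seq nat), uniq s ->
           (forall i, i \in s -> (i < K ^ h)%N /\
              ((f xstar - 3 * nu * rho ^+ h)%:E <= cell_sup f (P h i))%E) ->
           (size s)%:R <= C * rho `^ (- (d * h%:R)))].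

Definition fidelity_approx (R : realType) (X : Type) (f : X -> R)
    (fz : R -> X -> R) (zeta : R -> \bar R) (g : R -> R -> R)
    (lam : R -> R) (zc : R -> R) : Prop :=
  [/\ (forall z, 0 <= z <= 1 -> (0 <= zeta z)%E),
      (forall z, 0 <= z <= 1 -> forall a b, a < b -> g z a < g z b),
      (forall z, 0 <= z <= 1 ->
         (ereal_sup [set (`|f x - g z (fz z x)|)%:E | x in setT] <= zeta z)%E)
    & (forall c, 1 <= c -> 0 <= zc c <= 1 /\ lam (zc c) <= c)].

(* cost-to-bias function Phi(c) = zeta(z_c), meaningful on [1, +oo) *)
Definition cost_to_bias (R : realType) (zeta : R -> \bar R) (zc : R -> R)
  : R -> \bar R := fun c => zeta (zc c).

Definition Ltilde (R : realType) (K : nat) (Lam : R) : nat :=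
  Num.truncn ((expR 1 - 1) * Lam / (2 * K%:R * expR 1 * (ln Lam + 1) ^+ 2)).

(* The Kometo algorithm, as a relation describing all admissible runs *)
(* (ties broken arbitrarily).                                          *)
Section Kometo.
Variables (R : realType) (X : Type) (K : nat) (xr : nat -> nat -> X)
  (fz : R -> X -> R) (zc : R -> R).

Definition fval (h i j : nat) : R := fz (zc (expR j%:R)) (xr h i).

Record kstate := KState {
  kT : nat -> nat -> nat -> bool;
  kO : nat -> nat -> bool
}.

Definition kinit : kstate := KState (fun _ _ _ => false) (fun _ _ => false).

Definition open_cell (s : kstate) (h i j : nat) : kstate :=
  KState (fun h' i' u => kT s h' i' u ||
                         [&& h' == h.+1, (K * i <= i')%N, (i' < K * i + K)%N
                           & (u <= j)%N])
         (fun h' i' => kO s h' i' || ((h' == h) && (i' == i))).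

Definition candidate (s : kstate) (h j i : nat) : bool :=
  [&& (i < K ^ h)%N, ~~ kO s h i & kT s h i j].

Inductive kstep (s : kstate) (h j : nat) : kstate -> Prop :=
| KOpen i : candidate s h j i ->
    (forall i', candidate s h j i' -> fval h i' j <= fval h i j) ->
    kstep s h j (open_cell s h i j)
| KSkip : (forall i, ~~ candidate s h j i) -> kstep s h j s.

Inductive krun : kstate -> seq (nat * nat) -> kstate -> Prop :=
| KRnil s : krun s [::] s
| KRcons s s1 s2 h j r : kstep s h j s1 -> krun s1 r s2 -> krun s ((h, j) :: r) s2.

Definition kjlevel (Lt h m : nat) : nat :=
  Num.truncn (ln (Lt%:R / (h * m)%:R : R)).

Definition kschedule (Lt : nat) : seq (nat * nat) :=
  flatten [seq [seq (h, kjlevel Lt h m) | m <- iota 1 (Lt %/ h)] | h <- iota 1 Lt].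

Definition kjmax (Lt : nat) : nat := Num.truncn (ln (Lt%:R : R)).

Definition kometo_output (Lt : nat) (x : X) : Prop :=
  exists (s : kstate) (xc : nat -> X) (jstar : nat),
    [/\ krun (open_cell kinit 0 0 (kjmax Lt)) (kschedule Lt) s,
        (forall j, (j <= kjmax Lt)%N -> exists h i,
           [/\ kT s h i j, xc j = xr h i &
               forall h' i', kT s h' i' j -> fval h' i' j <= fval h i j]),
        (jstar <= kjmax Lt)%N,
        (forall j, (j <= kjmax Lt)%N ->
           fz (zc Lt%:R) (xc j) <= fz (zc Lt%:R) (xc jstar))
      & x = xc jstar].

End Kometo.

Definition simple_regret (R : realType) (X : Type) (f : X -> R) (x : X) : \bar R :=
  (ereal_sup [set (f y)%:E | y in setT] - (f x)%:E)%E.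

(* Main.v *)
Require Import Defs.
From mathcomp Require Import all_boot all_order all_algebra.
From mathcomp Require Import all_classical all_reals all_analysis.
From mathcomp Require Import ring lra.
Import Order.TTheory GRing.Theory Num.Theory.
Local Open Scope classical_set_scope.
Local Open Scope ring_scope.

Set Implicit Arguments. Unset Strict Implicit. Unset Printing Implicit Defensive.

Section Comb.
Variables (R : realType) (X : Type) (K : nat) (xr : nat -> nat -> X)
  (fz : R -> X -> R) (zc : R -> R).

Local Notation step := (kstep K xr fz zc).
Local Notation run := (krun K xr fz zc).
Local Notation fv := (fval xr fz zc).

Lemma run_cat s r1 r2 s2 : run s (r1 ++ r2) s2 -> exists s1, run s r1 s1 /\ run s1 r2 s2.
Proof.
elim: r1 s => [|[h j] r1 IH] s /=.
  by move=> H; exists s; split => //; constructor.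
move=> H; inversion H as [|s0 s1 s2' h' j' r' Hs Hr' E1 E2 E3]; subst.
have [s3 [H1 H2]] := IH _ Hr'.
exists s3; split => //; econstructor; eauto.
Qed.

Lemma step_mono s h j s' : step s h j s' ->
  (forall a b c, kT s a b c -> kT s' a b c) /\ (forall a b, kO s a b -> kO s' a b).
Proof.
case => [i _ _|_]; last by [].
by split => [a b c|a b] /= ->.
Qed.

Lemma run_mono s r s' : run s r s' ->
  (forall a b c, kT s a b c -> kT s' a b c) /\ (forall a b, kO s a b -> kO s' a b).
Proof.
elim => [//|s0 s1 s2 h j r0 Hs _ [IH1 IH2]].
have [M1 M2] := step_mono Hs.
by split => *; [apply: IH1; apply: M1|apply: IH2; apply: M2].
Qed.

Definition kO_le s b := forall h i, kO s h i -> (h <= b)%N.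

Lemma run_depth s h r s' b : run s (map (fun u => (h, u)) r) s' -> (h <= b)%N ->
  kO_le s b -> kO_le s' b.
Proof.
elim: r s => [|u r IH] s /= Hr hb Hs.
  by inversion Hr; subst.
inversion Hr as [|s0 s1 s2' h' j' r' H3 H6 E1 E2 E3]; subst.
apply: (IH s1) => //.
case: H3 => [i _ _|_] //.
move=> h' i' /= /orP [/Hs //|/andP [/eqP -> _]] //.
Qed.

Definition Inv1 j h c s := kO s h c -> forall l, (l < K)%N -> kT s h.+1 (K * c + l)%N j.

Lemma step_inv1 j h c s u s' : step s h u s' -> (j <= u)%N -> Inv1 j h c s -> Inv1 j h c s'.
Proof.
case => [i _ _|_] ju Hs //.
move=> /= /orP [/Hs H l Hl|/andP [_ /eqP ->] l Hl]; apply/orP.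
  by left; apply: H.
right; rewrite eqxx ju leq_addr /= andbT.
by rewrite ltn_add2l.
Qed.

Lemma phase1 j h c r s s' : run s (map (fun u => (h, u)) r) s' ->
  all (leq j) r -> Inv1 j h c s -> Inv1 j h c s'.
Proof.
elim: r s => [|u r IH] s /= Hr.
  by inversion Hr; subst.
inversion Hr as [|s0 s1 s2' h' j' r' H3 H6 E1 E2 E3]; subst => /andP [ju Hall] Hs.
apply: (IH s1) => //.
exact: step_inv1 H3 ju Hs.
Qed.

Lemma phase2 j h c r s s' (L : seq nat) : run s (map (fun u => (h, u)) r) s' ->
  all (eq_op j) r -> (c < K ^ h)%N -> kT s h c j -> Inv1 j h c s ->
  (forall i, i \in L -> kO s h i) -> uniq L ->
  (forall i, i \in L -> (i < K ^ h)%N /\ fv h c j <= fv h i j) ->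
  Inv1 j h c s' /\ (kO s' h c \/ exists L', [/\ uniq L',
     (forall i, i \in L' -> (i < K ^ h)%N /\ fv h c j <= fv h i j) &
     (size L + size r <= size L')%N]).
Proof.
elim: r s L => [|u r IH] s L /= Hr.
  inversion Hr; subst => _ _ _ Hi _ HU HL; split => //; right.
  by exists L; rewrite addn0.
inversion Hr as [|s0 s1 s2' h' j' r' H3 H6 E1 E2 E3]; subst => /andP [/eqP ju Hall] Hc HT Hs HLO HU HL; subst u.
have [M1 M2] := run_mono Hr.
case Oc: (kO s h c).
  split; first by apply: (phase1 (r := j :: r) Hr) => //=; rewrite leqnn /=;
    apply/allP => x /(allP Hall) /eqP ->.
  by left; apply: M2.
have cand : candidate K s h j c by rewrite /candidate Hc Oc HT.
have Hs1 := step_inv1 H3 (leqnn j) Hs.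
have [M1' M2'] := step_mono H3.
case: H3 Hs1 M1' M2' H6 => [i ci Hmax|Hno]; last by rewrite (negbTE (Hno c)) in cand.
move=> Hs1 M1' M2' H6.
have Hi : i \notin L.
  apply/negP => /HLO Hk; move: ci; rewrite /candidate Hk /=.
  by rewrite andbF.
have := IH _ (i :: L) H6 Hall Hc (M1' _ _ _ HT) Hs1.
case=> //.
- move=> k; rewrite inE => /orP [/eqP ->|/HLO /M2' //].
  by rewrite /= eqxx eqxx orbT.
- by rewrite /= Hi HU.
- move=> k; rewrite inE => /orP [/eqP ->|/HL //].
  split; last by apply: Hmax.
  by move: ci; rewrite /candidate => /andP [].
move=> H1 [H2|[L' [U1 U2 U3]]]; split => //; first by left.
right; exists L'; split => //.
by move: U3; rewrite /= addSn addnS.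
Qed.

Lemma block j h c r1 r2 r3 s s' :
  run s (map (fun u => (h, u)) (r1 ++ r2 ++ r3)) s' ->
  all (leq j) r1 -> all (eq_op j) r2 -> (c < K ^ h)%N -> kT s h c j -> ~~ kO s h c ->
  (forall L, uniq L -> (forall i, i \in L -> (i < K ^ h)%N /\ fv h c j <= fv h i j) ->
     (size L < size r2)%N) ->
  forall l, (l < K)%N -> kT s' h.+1 (K * c + l)%N j.
Proof.
rewrite !map_cat => Hr A1 A2 Hc HT HO Hb.
have [s1 [R1 Hr']] := run_cat Hr.
have [s2 [R2 R3]] := run_cat Hr'.
have I0 : Inv1 j h c s by move=> Hk; rewrite Hk in HO.
have I1 := phase1 R1 A1 I0.
have [T1 _] := run_mono R1.
have P2 := phase2 (L := [::]) R2 A2 Hc (T1 _ _ _ HT) I1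
   (fun i (H : i \in [::]) => ltac:(done)) erefl (fun i (H : i \in [::]) => ltac:(done)).
case: P2 => HI2 [HO2|[L' [U1 U2 U3]]].
  move=> l Hl; have [T3 _] := run_mono R3; apply: T3; exact: HI2 HO2 l Hl.
by have := Hb L' U1 U2; rewrite ltnNge U3.
Qed.

End Comb.

Section Comb2.
Variables (R : realType) (X : Type) (K : nat) (xr : nat -> nat -> X)
  (fz : R -> X -> R) (zc : R -> R).

Local Notation step := (kstep K xr fz zc).
Local Notation run := (krun K xr fz zc).
Local Notation fv := (fval xr fz zc).

Definition blk Lt h := [seq kjlevel R Lt h m | m <- iota 1 (Lt %/ h)].

Lemma blkE Lt h : [seq (h, kjlevel R Lt h m) | m <- iota 1 (Lt %/ h)] =
  map (fun u => (h, u)) (blk Lt h).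
Proof. by rewrite /blk -map_comp. Qed.

Lemma main_ind (Q : nat -> nat -> Prop) j jm Lt H s :
 (j <= jm)%N -> (H <= Lt)%N -> Q 0%N 0%N ->
 (forall h c, Q h c -> (c < K^h)%N) ->
 (forall h c, Q h c -> exists2 l, (l < K)%N & Q h.+1 (K*c+l)%N) ->
 (forall h c, (1 <= h <= H)%N -> Q h c -> exists r1 r2 r3,
    [/\ blk Lt h = r1 ++ r2 ++ r3, all (leq j) r1, all (eq_op j) r2 &
      forall L, uniq L -> (forall i, i \in L -> (i < K^h)%N /\ fv h c j <= fv h i j) ->
      (size L < size r2)%N]) ->
 run (open_cell K kinit 0 0 jm) (kschedule R Lt) s -> exists c, Q H.+1 c /\ kT s H.+1 c j.
Proof.
move=> jjm HLt Q0 Qlt Qch Hblk.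
have E0 : iota 1 Lt = iota 1 H ++ iota (1 + H) (Lt - H) by rewrite -iotaD subnKC.
rewrite /kschedule E0 map_cat flatten_cat => Hr.
have [sH [RH Rrest]] := run_cat Hr.
have claim : forall n s', (n <= H)%N ->
  run (open_cell K kinit 0 0 jm)
    (flatten [seq [seq (h, kjlevel R Lt h m) | m <- iota 1 (Lt %/ h)] | h <- iota 1 n]) s' ->
  kO_le s' n /\ exists c, Q n.+1 c /\ kT s' n.+1 c j.
{ elim => [|n IH] s'.
move=> _ Hr0; inversion Hr0; subst; split.
    by move=> h i /= /andP [/eqP -> _].
  have [l lK Ql] := Qch _ _ Q0.
  exists (K * 0 + l)%N; split => //=.
  by rewrite muln0 add0n lK jjm leq0n.
move=> nH.
have E1 : iota 1 n.+1 = iota 1 n ++ [:: n.+1] by rewrite -[n.+1]addn1 iotaD add1n addn1.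
rewrite E1 map_cat flatten_cat => Hr1.
have [sn [Rn Rb]] := run_cat Hr1.
have [Ole [c [Qc Tc]]] := IH sn (ltnW nH) Rn.
move: Rb; rewrite /= cats0 blkE => Rb.
have Hn2 : (0 < n.+1 <= H)%N by rewrite nH.
have [r1 [r2 [r3 [E A1 A2 Hb]]]] := Hblk _ _ Hn2 Qc.
rewrite E in Rb.
have HO : ~~ kO sn n.+1 c by apply/negP => /Ole; rewrite ltnn.
have Hch := block Rb A1 A2 (Qlt _ _ Qc) Tc HO Hb.
split; first exact: run_depth Rb (leqnn _) (fun h i H => leqW (Ole h i H)).
have [l lK Ql] := Qch _ _ Qc.
by exists (K * c + l)%N; split => //; apply: Hch.
}
have [_ [c [Qc Tc]]] := claim H sH (leqnn H) RH.
  exists c; split => //.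
  by have [T _] := run_mono Rrest; apply: T.
Qed.

End Comb2.

Lemma powR_decr (R : realType) (rho a b : R) : 0 < rho < 1 -> a <= b ->
  rho `^ b <= rho `^ a.
Proof.
case/andP => r0 r1 ab; rewrite /powR gt_eqF // ler_expR.
apply: ler_wnM2r => //; apply/ltW/ln_lt0; by rewrite r0 r1.
Qed.

Lemma bias_bound (R : realType) (X : Type) (f : X -> R) (fz : R -> X -> R) (zeta : R -> \bar R) (g : R -> R -> R) (z r : R) :
  (ereal_sup [set (`|f x - g z (fz z x)|)%:E | x in setT] <= zeta z)%E ->
  (zeta z <= r%:E)%E -> forall y, `|f y - g z (fz z y)| <= r.
Proof.
move=> H1 H2 y; rewrite -lee_fin; apply: le_trans H2; apply: le_trans H1.
by apply: ereal_sup_ubound; exists y.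
Qed.

Lemma compare (R : realType) (X : Type) (f : X -> R) (fz : R -> X -> R) (zeta : R -> \bar R) (g : R -> R -> R) (z r : R) :
  (forall a b, a < b -> g z a < g z b) ->
  (ereal_sup [set (`|f x - g z (fz z x)|)%:E | x in setT] <= zeta z)%E ->
  (zeta z <= r%:E)%E -> forall a b, fz z a <= fz z b -> f a <= f b + 2 * r.
Proof.
move=> gm H1 H2 a b ab.
have Ha := @bias_bound R X f fz zeta g z r H1 H2 a; have Hb := @bias_bound R X f fz zeta g z r H1 H2 b.
have gab : g z (fz z a) <= g z (fz z b).
  by case: (ltrP (fz z a) (fz z b)) => [/gm /ltW //|ba]; rewrite (@le_anti _ _ (fz z a) (fz z b)) ?ab.
move: Ha Hb; rewrite !ler_norml => /andP [Ha1 Ha2] /andP [Hb1 Hb2].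
lra.
Qed.

Unset Implicit Arguments. Set Strict Implicit.

Theorem lemma7 (R : realType) (X : Type) (K : nat)
    (P : nat -> nat -> set X) (xr : nat -> nat -> X)
    (nu rho d C : R) (f : X -> R)
    (fz : R -> X -> R) (zeta : R -> \bar R) (g : R -> R -> R)
    (lam : R -> R) (zc : R -> R)
    (Lam : R) (Psi : R -> \bar R) (j : nat) (ht : R) :
  (2 <= K)%N ->
  hier_partition K P xr ->
  0 < nu -> 0 < rho < 1 -> 0 <= d -> 1 < C ->
  class_S K P nu rho d C f ->
  fidelity_approx f fz zeta g lam zc ->
  1 <= Lam ->
  (forall a b, 1 <= a -> a <= b -> (Psi b <= Psi a)%E) ->
  (forall c, 1 <= c -> (cost_to_bias zeta zc c <= Psi c)%E) ->
  0 < ht ->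
  (Psi (expR j%:R) <= (nu * rho `^ ht)%:E)%E ->
  (Ltilde K Lam)%:R / (4 * ht * expR j%:R) >= C * rho `^ (- (d * ht)) ->
  forall x : X, kometo_output K xr fz zc (Ltilde K Lam) x ->
  (simple_regret f x <=
     (3 * nu / rho * rho `^ ht)%:E + 2%:E * Psi (Ltilde K Lam)%:R)%E.
Proof.
move=> HK [P00 Pch Pdisj Pxr] nu0 rho01 d0 C1 [xs [Hmax Hcell Hnear]]
  [zeta0 gmono Hbias Hzc] Lam1 Psimono HPsi ht0 Hj Hcount x Hout.
move: Hcount Hout; set Lt := Ltilde K Lam => Hcount Hout.
have r0 : 0 < rho by case/andP: rho01.
have r1 : rho < 1 by case/andP: rho01.
have Esup : ereal_sup [set (f y)%:E | y in setT] = (f xs)%:E.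
  apply/le_anti/andP; split.
    by apply: ge_ereal_sup => _ [y _ <-]; rewrite lee_fin; exact: Hmax.
  by apply: ereal_sup_ubound; exists xs.
rewrite /simple_regret Esup -EFinB.
have ej1 : 1 <= expR j%:R :> R.
  have := expR_ge1Dx (j%:R : R); move=> hh; apply: le_trans hh; by rewrite lerDl ler0n.
have ejp : 0 < expR j%:R :> R by exact: expR_gt0.
have rn0 : rho != 0 by rewrite gt_eqF.
have pw1 : 1 <= rho `^ (-(d*ht)).
  rewrite -(powRr0 rho); apply: powR_decr => //.
  by rewrite oppr_le0 mulr_ge0 // ltW.
have Y1 : 1 < C * rho `^ (-(d*ht)) by nra.
have Dpos : 0 < 4 * ht * expR j%:R by rewrite !mulr_gt0.
have Lbig : 4 * ht * expR j%:R < Lt%:R.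
  by have := lt_le_trans Y1 Hcount; rewrite ltr_pdivlMr // mul1r.
have Lt1 : (0 < Lt)%N by rewrite -(ltr0n R); exact: lt_trans Dpos Lbig.
have Lt1R : 1 <= Lt%:R :> R by rewrite ler1n.
have zL := Hzc _ Lt1R; case: zL => zL _.
have bL := HPsi _ Lt1R; rewrite /cost_to_bias in bL.
have z0L := zeta0 _ zL.
case EP: (Psi Lt%:R) => [r| |]; [|by rewrite mulry gtr0_sg // mul1e; exact: leey|by move: (le_trans z0L bL); rewrite EP].


rewrite EP in bL.
rewrite -EFinM -EFinD lee_fin.
have rge0 : 0 <= r by rewrite -lee_fin; exact: le_trans z0L bL.
have cmpL := @compare R X f fz zeta g (zc Lt%:R) r (gmono _ zL) (Hbias _ zL) bL.
set Z := rho `^ ht.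
have Z0 : 0 <= Z by rewrite /Z powR_ge0.
have E3 : 3 * nu / rho * Z = (3 * nu * Z) / rho by rewrite mulrAC.
have W1 : 3 * nu * Z <= 3 * nu / rho * Z.
  rewrite E3 ler_pdivlMr //; have : 0 <= 3 * nu * Z by rewrite !mulr_ge0 // ltW.
  nra.
have [ht1|ht1] := lerP ht 1.
  have := Hcell 0%N 0%N x (ltn0Sn _); rewrite P00 expr0 mulr1 => /(_ I I) Hx.
  have ZZ : rho <= Z by rewrite /Z -{1}(powRr1 (ltW r0)); apply: powR_decr.
  have : nu <= nu / rho * Z.
    rewrite -{1}(divfK rn0 nu); apply: ler_wpM2l => //.
    by rewrite divr_ge0 // ltW.
  have E4 : 3 * nu / rho * Z = 3 * (nu / rho * Z) by rewrite !mulrA.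
  rewrite E4; lra.

set Hn := Num.truncn ht.
have Hn1 : (0 < Hn)%N by rewrite /Hn truncn_gt0 ltW.
have HnR : Hn%:R <= ht by rewrite /Hn truncn_le ltW.
have HnS : ht < Hn.+1%:R by rewrite /Hn truncnS_gt.
have E5 : 4 * ht * expR j%:R = ht * (4 * expR j%:R) by ring.
have htL : ht <= Lt%:R.
  apply: ltW; apply: le_lt_trans Lbig; rewrite E5 -{1}[ht]mulr1 ler_wpM2l ?(ltW ht0) //.
  lra.
have ejLt : expR j%:R <= Lt%:R :> R.
  apply: ltW; apply: le_lt_trans Lbig; rewrite -{1}[expR j%:R]mul1r ler_wpM2r ?(ltW ejp) //.
  lra.
have jjm : (j <= kjmax R Lt)%N.
  rewrite /kjmax truncn_ge_nat; last by rewrite ln_ge0.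
  rewrite -[X in X <= _]expRK ler_ln // posrE //.
  exact: lt_le_trans ejp ejLt.
have HLt : (Hn <= Lt)%N by rewrite -(ler_nat R); exact: le_trans HnR htL.
set z := zc (expR j%:R).
have zj : 0 <= z <= 1 by have [] := Hzc _ ej1.
set dl := nu * Z.
have bj : (zeta z <= dl%:E)%E.
  by apply: le_trans Hj; have := HPsi _ ej1; rewrite /cost_to_bias.
have cmpj := @compare R X f fz zeta g z dl (gmono _ zj) (Hbias _ zj) bj.
have e2 : 2 <= expR 1 :> R.
  by have := expR_ge1Dx (1 : R); rewrite (_ : 1 + 1 = 2) //.
have Kp : (0 < K)%N by apply: leq_trans HK.
case: Hout => s [xc [jstar [Hrun Hxc Hjs Hsel ->]]].
pose Q := fun h c => (c < K ^ h)%N /\ P h c xs.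
have Q0 : Q 0%N 0%N by split; rewrite ?expn0 ?P00.
have Qlt : forall h c, Q h c -> (c < K ^ h)%N by move=> h c [].
have Qch : forall h c, Q h c -> exists2 l, (l < K)%N & Q h.+1 (K * c + l)%N.
  move=> h c [cK Pc].
  move: Pc; rewrite (Pch _ _ cK) => -[l /= lK Pl].
  exists l => //; split => //.
  rewrite expnS.
  apply: (@leq_trans (K * c + K)); first by rewrite ltn_add2l.
  by rewrite addnC -mulnS leq_mul2l cK orbT.
have Hblk : forall h c, (1 <= h <= Hn)%N -> Q h c -> exists r1 r2 r3,
    [/\ blk R Lt h = r1 ++ r2 ++ r3, all (leq j) r1, all (eq_op j) r2 &
      forall L, uniq L -> (forall i, i \in L -> (i < K^h)%N /\
         fval xr fz zc h c j <= fval xr fz zc h i j) ->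
      (size L < size r2)%N].
  move=> h c /andP [h1 hH] [cK Pc].
  have hR1 : 1 <= h%:R :> R by rewrite ler1n.
  have hht : h%:R <= ht by apply: le_trans HnR; rewrite ler_nat.
  set e := expR (j%:R : R).
  set xx := Lt%:R / (h%:R * e).
  have he0 : 0 < h%:R * e by rewrite mulr_gt0 // (lt_le_trans ltr01 hR1).
  have xxE : xx * (h%:R * e) = Lt%:R by rewrite /xx divfK // gt_eqF.
  have xx0 : 0 <= xx by rewrite /xx divr_ge0 // ltW.
  have e1p : 0 < expR 1 :> R by exact: expR_gt0.
  set w := xx / expR 1.
  have wE : w * expR 1 = xx by rewrite /w divfK // gt_eqF.
  have w0 : 0 <= w by rewrite /w divr_ge0 // ltW.
  have w2 : w * 2 <= xx by rewrite -wE ler_wpM2l.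
  set A := Num.truncn w. set B := Num.truncn xx. set N := (Lt %/ h)%N.
  have AB : (A <= B)%N by apply: le_truncn; lra.
  have BxR : B%:R <= xx by rewrite truncn_le.
  have AwR : A%:R <= w by rewrite truncn_le.
  have h0 : (0 < h)%N by [].
  have BN : (B <= N)%N.
    rewrite leq_divRL // -(ler_nat R) natrM.
    apply: (@le_trans _ _ (xx * h%:R)); first by rewrite ler_wpM2r // ler0n.
    rewrite -xxE mulrA -{1}[xx * h%:R]mulr1 ler_wpM2l //.
    by rewrite mulr_ge0 // ler0n.
  have lvl_ge : forall m, (0 < m)%N -> (m <= B)%N -> (j <= kjlevel R Lt h m)%N.
    move=> m m0 mB.
    rewrite /kjlevel natrM.
    have mR : m%:R <= xx by rewrite -(truncn_ge_nat _ xx0).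
    have hm0 : 0 < h%:R * m%:R :> R by rewrite mulr_gt0 // ltr0n.
    have eL : e <= Lt%:R / (h%:R * m%:R).
      rewrite ler_pdivlMr // -xxE.
      have -> : e * (h%:R * m%:R) = m%:R * (h%:R * e) by ring.
      by rewrite ler_wpM2r // ltW.
    rewrite truncn_ge_nat; last by apply: ln_ge0; exact: le_trans ej1 eL.
    rewrite -[X in X <= _]expRK ler_ln ?posrE //; exact: lt_le_trans ejp eL.
  have lvl_le : forall m, (A < m)%N -> (kjlevel R Lt h m <= j)%N.
    move=> m Am.
    have m0 : (0 < m)%N by apply: leq_trans Am.
    have mR : w < m%:R by rewrite -(truncn_lt_nat _ w0).
    have hm0 : 0 < h%:R * m%:R :> R by rewrite mulr_gt0 // ltr0n.
    rewrite /kjlevel natrM truncn_le_nat.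
    have Ej : j.+1%:R = j%:R + 1 :> R by rewrite mulrS addrC.
    have Lpos : 0 < Lt%:R / (h%:R * m%:R) :> R by rewrite divr_gt0 // ltr0n.
    rewrite -[X in _ < X]expRK ltr_ln ?posrE ?expR_gt0 // Ej expRD.
    rewrite ltr_pdivrMr // -xxE -wE.
    have -> : w * expR 1 * (h%:R * e) = w * (expR 1 * (h%:R * e)) by ring.
    have -> : e * expR 1 * (h%:R * m%:R) = m%:R * (expR 1 * (h%:R * e)) by ring.
    by rewrite ltr_pM2r // mulr_gt0.
  exists [seq kjlevel R Lt h m | m <- iota 1 A],
         [seq kjlevel R Lt h m | m <- iota (1 + A) (B - A)],
         [seq kjlevel R Lt h m | m <- iota (1 + A + (B - A)) (N - B)].
  split.
  - rewrite /blk -!map_cat -!iotaD.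
    by rewrite addnA subnKC // subnKC.
  - apply/allP => u /mapP [m]; rewrite mem_iota => /andP [m1 mA] ->.
    apply: lvl_ge => //; apply: leq_trans AB; by rewrite -ltnS -add1n.
  - apply/allP => u /mapP [m]; rewrite mem_iota => /andP [m1 mA] ->.
    have m0 : (0 < m)%N := leq_trans (leq_addr A 1) m1.
    have Am : (A < m)%N by move: m1; rewrite add1n.
    have mB : (m <= B)%N by move: mA; rewrite -addnA subnKC // add1n ltnS.
    by rewrite eqn_leq lvl_ge ?lvl_le.
  move=> L uL HL; rewrite size_map size_iota.
  have sL := Hnear h L uL.
  have sL' : (size L)%:R <= C * rho `^ (- (d * h%:R)).
    apply: sL => i /HL [iK fv]; split => //.
    apply: (@le_trans _ _ (f (xr h i))%:E); last first.
      by apply: ereal_sup_ubound; exists (xr h i) => //; exact: Pxr.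
    rewrite lee_fin.
    have q1 := cmpj _ _ fv.
    have q2 := Hcell _ _ _ cK Pc (Pxr _ _ cK).
    have q3 : Z <= rho ^+ h.
      by rewrite -powR_mulrn ?(ltW r0) //; apply: powR_decr.
    have q4 : dl <= nu * rho ^+ h by apply: ler_wpM2l => //; apply: ltW.
    rewrite /fval in q1; lra.
  set y := C * rho `^ (- (d * h%:R)) in sL'.
  set Y := C * rho `^ (- (d * ht)) in Hcount Y1.
  have C0 : 0 <= C by apply: ltW; apply: lt_trans ltr01 C1.
  have yY : y <= Y.
    rewrite /y /Y ler_wpM2l //; apply: powR_decr => //.
    by rewrite lerN2 ler_wpM2l.
  have y1 : 1 < y.
    apply: lt_le_trans C1 _; rewrite /y -{1}[C]mulr1 ler_wpM2l //.
    rewrite -[X in X <= _](powRr0 rho); apply: powR_decr => //.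
    by rewrite oppr_le0 mulr_ge0 // ler0n.
  have Y4 : Y * 4 <= xx.
    have hte : 0 < ht * e by rewrite mulr_gt0.
    rewrite -(ler_pM2r hte).
    apply: (@le_trans _ _ (xx * (h%:R * e))); last by rewrite ler_wpM2l // ler_wpM2r // ltW.
    rewrite xxE.
    move: Hcount; rewrite ler_pdivlMr //.
    by have -> : Y * 4 * (ht * e) = Y * (4 * ht * e) by ring.
  have BS : xx < B%:R + 1.
    by have := truncnS_gt xx; rewrite -/B mulrS addrC.
  rewrite -(ltr_nat R) natrB //.
  lra.
have [c [[cK Pc] Tc]] := main_ind jjm HLt Q0 Qlt Qch Hblk Hrun.
have [h' [i [Ti Exc Hmx]]] := Hxc j jjm.
have c1 := cmpj _ _ (Hmx _ _ Tc).
rewrite -Exc in c1.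
have c2 := Hcell _ _ _ cK Pc (Pxr _ _ cK).
have c3 := cmpL _ _ (Hsel j jjm).
have c4 : rho ^+ Hn.+1 <= Z.
  by rewrite -powR_mulrn ?(ltW r0) //; apply: powR_decr => //; apply: ltW.
have c5 : nu * rho ^+ Hn.+1 <= nu * Z by apply: ler_wpM2l => //; apply: ltW.
rewrite /dl in c1.
lra.
Qed.
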